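(* Let $\Bbbk$ be a field and $M$ a generalized Coxeter matrix. Let $\widetilde{NC}(M)$ be the $\Bbbk$-algebra generated by $\{T_i : i \in I\}$ and an extra generator $T_\infty$, subject to the braid relations of $M$ among the $T_i$ and the relations $T_i^{m_{ii}} = T_iT_\infty = T_\infty T_i = T_\infty^2 = T_\infty$ for all $i \in I$. Then $\Bbbk T_\infty$ is a two-sided ideal with $\widetilde{NC}(M)/\Bbbk T_\infty \cong NC(M)$, and there is a unique bialgebra structure on $\widetilde{NC}(M)$ in which all $T_i$ and $T_\infty$ are grouplike, namely $\widetilde{\Delta}(T_i) = T_i \otimes T_i$, $\widetilde{\Delta}(T_\infty) = T_\infty\otimes T_\infty$, $\widetilde{\varepsilon}(T_i) = \widetilde{\varepsilon}(T_\infty) = 1$.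
   Context: A generalized Coxeter matrix is a symmetric matrix $M = (m_{ij})_{i,j\in I}$, $I$ finite, with $m_{ij}\in\{2,3,\dots\}\cup\{\infty\}$ for $i\ne j$ and finite $m_{ii}\ge 2$; the braid relations are $\underbrace{T_iT_jT_i\cdots}_{m_{ij}} = \underbrace{T_jT_iT_j\cdots}_{m_{ij}}$ for $i\ne j$ with $m_{ij}<\infty$, and $NC(M)$ is $\Bbbk\langle T_i\rangle$ modulo the braid relations and $T_i^{m_{ii}}=0$. An element $g$ is grouplike if $\Delta(g) = g\otimes g$ and $\varepsilon(g)=1$. *)

(* Defs.v *)
(* Presented k-algebras, their tensor squares/cubes and
   bialgebra structures are modelled as setoids over syntax trees, since
   MathComp has neither free algebras nor tensor products of algebras. *)
From HB Require Import structures.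
From mathcomp Require Import all_boot all_order all_algebra.
Set Implicit Arguments. Unset Strict Implicit. Unset Printing Implicit Defensive.
Import GRing.Theory.
Local Open Scope ring_scope.

(* ---------- generalized Coxeter matrices; None encodes infinity ---------- *)
Definition gen_coxeter (I : finType) (m : I -> I -> option nat) : Prop :=
  (forall i j, m i j = m j i) /\
  (forall i j, i != j -> forall n, m i j = Some n -> (2 <= n)%N) /\
  (forall i, exists2 n, m i i = Some n & (2 <= n)%N).

Section Presented.
Variables (k : fieldType) (X : Type).

Inductive fexpr : Type :=
 | FC of k | FV of X | FAdd of fexpr & fexpr | FMul of fexpr & fexpr.

Fixpoint fpow (a : fexpr) (n : nat) : fexpr :=
  if n is n'.+1 then FMul a (fpow a n') else FC 1.

Fixpoint braidw (a b : fexpr) (n : nat) : fexpr :=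
  if n is n'.+1 then FMul a (braidw b a n') else FC 1.

(* the congruence of k<X> generated by the k-algebra axioms (k central via FC)
   and the relations R: the quotient is k<X>/(R) *)
Inductive alg_eqv (R : fexpr -> fexpr -> Prop) : fexpr -> fexpr -> Prop :=
 | ae_rel a b : R a b -> alg_eqv R a b
 | ae_refl a : alg_eqv R a a
 | ae_sym a b : alg_eqv R a b -> alg_eqv R b a
 | ae_trans a b c : alg_eqv R a b -> alg_eqv R b c -> alg_eqv R a c
 | ae_add a a' b b' : alg_eqv R a a' -> alg_eqv R b b' ->
     alg_eqv R (FAdd a b) (FAdd a' b')
 | ae_mul a a' b b' : alg_eqv R a a' -> alg_eqv R b b' ->
     alg_eqv R (FMul a b) (FMul a' b')
 | ae_addA a b c : alg_eqv R (FAdd (FAdd a b) c) (FAdd a (FAdd b c))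
 | ae_addC a b : alg_eqv R (FAdd a b) (FAdd b a)
 | ae_add0 a : alg_eqv R (FAdd (FC 0) a) a
 | ae_addN a : alg_eqv R (FAdd (FMul (FC (-1)) a) a) (FC 0)
 | ae_mulA a b c : alg_eqv R (FMul (FMul a b) c) (FMul a (FMul b c))
 | ae_mul1l a : alg_eqv R (FMul (FC 1) a) a
 | ae_mul1r a : alg_eqv R (FMul a (FC 1)) a
 | ae_mulDl a b c : alg_eqv R (FMul (FAdd a b) c) (FAdd (FMul a c) (FMul b c))
 | ae_mulDr a b c : alg_eqv R (FMul a (FAdd b c)) (FAdd (FMul a b) (FMul a c))
 | ae_Cadd x y : alg_eqv R (FC (x + y)) (FAdd (FC x) (FC y))
 | ae_Cmul x y : alg_eqv R (FC (x * y)) (FMul (FC x) (FC y))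
 | ae_Ccomm x a : alg_eqv R (FMul (FC x) a) (FMul a (FC x)).

(* ---------- tensor square A (x) A of a setoid algebra (fexpr, eA) ---------- *)
Inductive texpr : Type :=
 | TT of fexpr & fexpr | TAdd of texpr & texpr | TScale of k & texpr.

Inductive t_eqv (eA : fexpr -> fexpr -> Prop) : texpr -> texpr -> Prop :=
 | te_refl s : t_eqv eA s s
 | te_sym s t : t_eqv eA s t -> t_eqv eA t s
 | te_trans s t u : t_eqv eA s t -> t_eqv eA t u -> t_eqv eA s u
 | te_add s s' t t' : t_eqv eA s s' -> t_eqv eA t t' ->
     t_eqv eA (TAdd s t) (TAdd s' t')
 | te_scale c s s' : t_eqv eA s s' -> t_eqv eA (TScale c s) (TScale c s')
 | te_TT a a' b b' : eA a a' -> eA b b' -> t_eqv eA (TT a b) (TT a' b')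
 | te_addA s t u : t_eqv eA (TAdd (TAdd s t) u) (TAdd s (TAdd t u))
 | te_addC s t : t_eqv eA (TAdd s t) (TAdd t s)
 | te_add0 s t : t_eqv eA (TAdd (TScale 0 s) t) t
 | te_scale1 s : t_eqv eA (TScale 1 s) s
 | te_scaleM x y s : t_eqv eA (TScale x (TScale y s)) (TScale (x * y) s)
 | te_scaleDl x y s : t_eqv eA (TScale (x + y) s) (TAdd (TScale x s) (TScale y s))
 | te_scaleDr x s t : t_eqv eA (TScale x (TAdd s t)) (TAdd (TScale x s) (TScale x t))
 | te_linDl a1 a2 b : t_eqv eA (TT (FAdd a1 a2) b) (TAdd (TT a1 b) (TT a2 b))
 | te_linDr a b1 b2 : t_eqv eA (TT a (FAdd b1 b2)) (TAdd (TT a b1) (TT a b2))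
 | te_linZl c a b : t_eqv eA (TT (FMul (FC c) a) b) (TScale c (TT a b))
 | te_linZr c a b : t_eqv eA (TT a (FMul (FC c) b)) (TScale c (TT a b)).

Fixpoint tmul_pure (a b : fexpr) (t : texpr) : texpr :=
  match t with
  | TT c d => TT (FMul a c) (FMul b d)
  | TAdd s u => TAdd (tmul_pure a b s) (tmul_pure a b u)
  | TScale x s => TScale x (tmul_pure a b s)
  end.
Fixpoint tmul (s t : texpr) : texpr :=
  match s with
  | TT a b => tmul_pure a b t
  | TAdd s1 s2 => TAdd (tmul s1 t) (tmul s2 t)
  | TScale x s1 => TScale x (tmul s1 t)
  end.
Definition tone : texpr := TT (FC 1) (FC 1).

Inductive t3expr : Type :=
 | T3 of fexpr & fexpr & fexpr | T3Add of t3expr & t3expr | T3Scale of k & t3expr.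

Inductive t3_eqv (eA : fexpr -> fexpr -> Prop) : t3expr -> t3expr -> Prop :=
 | t3e_refl s : t3_eqv eA s s
 | t3e_sym s t : t3_eqv eA s t -> t3_eqv eA t s
 | t3e_trans s t u : t3_eqv eA s t -> t3_eqv eA t u -> t3_eqv eA s u
 | t3e_add s s' t t' : t3_eqv eA s s' -> t3_eqv eA t t' ->
     t3_eqv eA (T3Add s t) (T3Add s' t')
 | t3e_scale c s s' : t3_eqv eA s s' -> t3_eqv eA (T3Scale c s) (T3Scale c s')
 | t3e_T3 a a' b b' c c' : eA a a' -> eA b b' -> eA c c' ->
     t3_eqv eA (T3 a b c) (T3 a' b' c')
 | t3e_addA s t u : t3_eqv eA (T3Add (T3Add s t) u) (T3Add s (T3Add t u))
 | t3e_addC s t : t3_eqv eA (T3Add s t) (T3Add t s)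
 | t3e_add0 s t : t3_eqv eA (T3Add (T3Scale 0 s) t) t
 | t3e_scale1 s : t3_eqv eA (T3Scale 1 s) s
 | t3e_scaleM x y s : t3_eqv eA (T3Scale x (T3Scale y s)) (T3Scale (x * y) s)
 | t3e_scaleDl x y s :
     t3_eqv eA (T3Scale (x + y) s) (T3Add (T3Scale x s) (T3Scale y s))
 | t3e_scaleDr x s t :
     t3_eqv eA (T3Scale x (T3Add s t)) (T3Add (T3Scale x s) (T3Scale x t))
 | t3e_lin1D a1 a2 b c :
     t3_eqv eA (T3 (FAdd a1 a2) b c) (T3Add (T3 a1 b c) (T3 a2 b c))
 | t3e_lin2D a b1 b2 c :
     t3_eqv eA (T3 a (FAdd b1 b2) c) (T3Add (T3 a b1 c) (T3 a b2 c))
 | t3e_lin3D a b c1 c2 :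
     t3_eqv eA (T3 a b (FAdd c1 c2)) (T3Add (T3 a b c1) (T3 a b c2))
 | t3e_lin1Z x a b c : t3_eqv eA (T3 (FMul (FC x) a) b c) (T3Scale x (T3 a b c))
 | t3e_lin2Z x a b c : t3_eqv eA (T3 a (FMul (FC x) b) c) (T3Scale x (T3 a b c))
 | t3e_lin3Z x a b c : t3_eqv eA (T3 a b (FMul (FC x) c)) (T3Scale x (T3 a b c)).

Fixpoint t_append (t : texpr) (c : fexpr) : t3expr :=
  match t with
  | TT x y => T3 x y c
  | TAdd s u => T3Add (t_append s c) (t_append u c)
  | TScale z s => T3Scale z (t_append s c)
  end.
Fixpoint t_prepend (a : fexpr) (t : texpr) : t3expr :=
  match t with
  | TT x y => T3 a x y
  | TAdd s u => T3Add (t_prepend a s) (t_prepend a u)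
  | TScale z s => T3Scale z (t_prepend a s)
  end.
Fixpoint t_Dl (D : fexpr -> texpr) (t : texpr) : t3expr :=
  match t with
  | TT a b => t_append (D a) b
  | TAdd s u => T3Add (t_Dl D s) (t_Dl D u)
  | TScale z s => T3Scale z (t_Dl D s)
  end.
Fixpoint t_Dr (D : fexpr -> texpr) (t : texpr) : t3expr :=
  match t with
  | TT a b => t_prepend a (D b)
  | TAdd s u => T3Add (t_Dr D s) (t_Dr D u)
  | TScale z s => T3Scale z (t_Dr D s)
  end.
Fixpoint t_epsl (e : fexpr -> k) (t : texpr) : fexpr :=
  match t with
  | TT a b => FMul (FC (e a)) b
  | TAdd s u => FAdd (t_epsl e s) (t_epsl e u)
  | TScale z s => FMul (FC z) (t_epsl e s)
  end.
Fixpoint t_epsr (e : fexpr -> k) (t : texpr) : fexpr :=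
  match t with
  | TT a b => FMul (FC (e b)) a
  | TAdd s u => FAdd (t_epsr e s) (t_epsr e u)
  | TScale z s => FMul (FC z) (t_epsr e s)
  end.

Definition is_bialgebra (eA : fexpr -> fexpr -> Prop)
    (D : fexpr -> texpr) (e : fexpr -> k) : Prop :=
  (forall a b, eA a b -> t_eqv eA (D a) (D b)) /\
  (forall x, t_eqv eA (D (FC x)) (TScale x tone)) /\
  (forall a b, t_eqv eA (D (FAdd a b)) (TAdd (D a) (D b))) /\
  (forall a b, t_eqv eA (D (FMul a b)) (tmul (D a) (D b))) /\
  (forall a b, eA a b -> e a = e b) /\
  (forall x, e (FC x) = x) /\
  (forall a b, e (FAdd a b) = e a + e b) /\
  (forall a b, e (FMul a b) = e a * e b) /\
  (forall a, t3_eqv eA (t_Dl D (D a)) (t_Dr D (D a))) /\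
  (forall a, eA (t_epsl e (D a)) a /\ eA (t_epsr e (D a)) a).

Definition gens_grouplike (eA : fexpr -> fexpr -> Prop)
    (D : fexpr -> texpr) (e : fexpr -> k) : Prop :=
  forall x : X, t_eqv eA (D (FV x)) (TT (FV x) (FV x)) /\ e (FV x) = 1.

End Presented.

Arguments FC {k X} _.
Arguments FV {k X} _.
Arguments FAdd {k X} _ _.
Arguments FMul {k X} _ _.
Arguments TT {k X} _ _.

Definition alg_hom (k : fieldType) (X Y : Type)
    (eA : fexpr k X -> fexpr k X -> Prop) (eB : fexpr k Y -> fexpr k Y -> Prop)
    (phi : fexpr k X -> fexpr k Y) : Prop :=
  [/\ (forall a b, eA a b -> eB (phi a) (phi b)),
      (forall x, eB (phi (FC x)) (FC x)),
      (forall a b, eB (phi (FAdd a b)) (FAdd (phi a) (phi b))) &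
      (forall a b, eB (phi (FMul a b)) (FMul (phi a) (phi b)))].

Section Relations.
Variables (k : fieldType) (I : finType) (m : I -> I -> option nat).

Inductive nc_rel : fexpr k I -> fexpr k I -> Prop :=
 | ncr_braid i j n : i != j -> m i j = Some n ->
     nc_rel (braidw (FV i) (FV j) n) (braidw (FV j) (FV i) n)
 | ncr_nil i n : m i i = Some n -> nc_rel (fpow (FV i) n) (FC 0).

(* NC~(M): generators Some i = T_i and None = T_infinity *)
Inductive nct_rel : fexpr k (option I) -> fexpr k (option I) -> Prop :=
 | nctr_braid i j n : i != j -> m i j = Some n ->
     nct_rel (braidw (FV (Some i)) (FV (Some j)) n)
             (braidw (FV (Some j)) (FV (Some i)) n)
 | nctr_pow i n : m i i = Some n -> nct_rel (fpow (FV (Some i)) n) (FV None)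
 | nctr_left i : nct_rel (FMul (FV (Some i)) (FV None)) (FV None)
 | nctr_right i : nct_rel (FMul (FV None) (FV (Some i))) (FV None)
 | nctr_sq : nct_rel (FMul (FV None) (FV None)) (FV None).

Definition NC_eqv := alg_eqv nc_rel.
Definition NCt_eqv := alg_eqv nct_rel.
Definition Tinf : fexpr k (option I) := FV None.

End Relations.
Arguments NC_eqv {k I} m _ _.
Arguments NCt_eqv {k I} m _ _.
Arguments Tinf k I : clear implicits.

(* Main.v *)
Require Import Defs.
From mathcomp Require Import all_boot all_order all_algebra.
From Stdlib Require Import Setoid Morphisms.
Set Implicit Arguments. Unset Strict Implicit. Unset Printing Implicit Defensive.
Import GRing.Theory.
Local Open Scope ring_scope.

Section Alg.
Variables (k : fieldType) (X : Type) (R : fexpr k X -> fexpr k X -> Prop).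
Local Notation E := (alg_eqv R).

#[global] Instance E_equiv : Equivalence E.
Proof. split; [exact: ae_refl | exact: ae_sym | exact: ae_trans]. Qed.
#[global] Instance FAdd_prop : Proper (E ==> E ==> E) FAdd.
Proof. by move=> ? ? ? ? ? ?; apply: ae_add. Qed.
#[global] Instance FMul_prop : Proper (E ==> E ==> E) FMul.
Proof. by move=> ? ? ? ? ? ?; apply: ae_mul. Qed.

Lemma addr0E a : E (FAdd a (FC 0)) a.
Proof. setoid_rewrite ae_addC. apply: ae_add0. Qed.

Lemma mul0E a : E (FMul (FC 0) a) (FC 0).
Proof.
have h : E (FMul (FC 0) a) (FAdd (FMul (FC 0) a) (FMul (FC 0) a)).
  setoid_rewrite <- ae_mulDl. setoid_rewrite <- ae_Cadd. rewrite addr0; reflexivity.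
transitivity (FAdd (FAdd (FMul (FC (-1)) (FMul (FC 0) a)) (FMul (FC 0) a)) (FMul (FC 0) a)).
  setoid_rewrite ae_addN. symmetry. apply: ae_add0.
setoid_rewrite ae_addA. setoid_rewrite <- h. apply: ae_addN.
Qed.
Lemma mul0rE a : E (FMul a (FC 0)) (FC 0).
Proof. setoid_rewrite <- ae_Ccomm. apply: mul0E. Qed.
Lemma scalA c d a : E (FMul (FC c) (FMul (FC d) a)) (FMul (FC (c*d)) a).
Proof. setoid_rewrite <- ae_mulA. setoid_rewrite <- ae_Cmul. reflexivity. Qed.
Lemma mulCl a c b : E (FMul a (FMul (FC c) b)) (FMul (FC c) (FMul a b)).
Proof.
transitivity (FMul (FMul a (FC c)) b); first by symmetry; apply: ae_mulA.
transitivity (FMul (FMul (FC c) a) b); last by apply: ae_mulA.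
apply: ae_mul; last reflexivity. symmetry; apply: ae_Ccomm.
Qed.
Lemma addCl c d a : E (FAdd (FMul (FC c) a) (FMul (FC d) a)) (FMul (FC (c+d)) a).
Proof. setoid_rewrite <- ae_mulDl. setoid_rewrite <- ae_Cadd. reflexivity. Qed.
Lemma add_swap a b c d : E (FAdd (FAdd a b) (FAdd c d)) (FAdd (FAdd a c) (FAdd b d)).
Proof.
setoid_rewrite ae_addA. apply: ae_add; first reflexivity.
setoid_rewrite <- ae_addA. setoid_rewrite (ae_addC R b c). reflexivity.
Qed.
End Alg.

Section Ideal.
Variables (k : fieldType) (I : finType) (m : I -> I -> option nat).
Local Notation E := (alg_eqv (@nct_rel k I m)).
Local Notation T := (FV (@None I) : fexpr k (option I)).
Definition PT (z : fexpr k (option I)) := exists c, E z (FMul (FC c) T).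

Lemma idealL a : PT (FMul a T).
Proof.
elim: a => [c|[i|]|a [c1 h1] b [c2 h2]|a [c1 h1] b [c2 h2]].
- by exists c; reflexivity.
- exists 1; transitivity (FV None : fexpr k (option I)); [by apply: ae_rel; constructor| symmetry; apply: ae_mul1l].
- exists 1; transitivity (FV None : fexpr k (option I)); [by apply: ae_rel; constructor| symmetry; apply: ae_mul1l].
- exists (c1 + c2). setoid_rewrite ae_mulDl. setoid_rewrite h1. setoid_rewrite h2. apply: addCl.
- exists (c2 * c1). setoid_rewrite ae_mulA. setoid_rewrite h2. setoid_rewrite mulCl.
  setoid_rewrite h1. apply: scalA.
Qed.

Lemma idealR a : PT (FMul T a).
Proof.
elim: a => [c|[i|]|a [c1 h1] b [c2 h2]|a [c1 h1] b [c2 h2]].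
- exists c; apply: ae_sym; apply: ae_Ccomm.
- exists 1; transitivity (FV None : fexpr k (option I)); [by apply: ae_rel; constructor| symmetry; apply: ae_mul1l].
- exists 1; transitivity (FV None : fexpr k (option I)); [by apply: ae_rel; constructor| symmetry; apply: ae_mul1l].
- exists (c1 + c2). setoid_rewrite ae_mulDr. setoid_rewrite h1. setoid_rewrite h2. apply: addCl.
- exists (c1 * c2). setoid_rewrite <- ae_mulA. setoid_rewrite h1. setoid_rewrite ae_mulA.
  setoid_rewrite h2. apply: scalA.
Qed.

Lemma PT0 : PT (FC 0).
Proof. exists 0; symmetry; apply: mul0E. Qed.
Lemma PTT : PT T.
Proof. exists 1; symmetry; apply: ae_mul1l. Qed.
Lemma PT_add z1 z2 : PT z1 -> PT z2 -> PT (FAdd z1 z2).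
Proof. move=> [c1 h1] [c2 h2]; exists (c1 + c2); setoid_rewrite h1; setoid_rewrite h2; apply: addCl. Qed.
Lemma PT_mull a z : PT z -> PT (FMul a z).
Proof.
move=> [c h]; have [d hd] := idealL a; exists (c * d).
setoid_rewrite h. setoid_rewrite mulCl. setoid_rewrite hd. apply: scalA.
Qed.
Lemma PT_mulr z a : PT z -> PT (FMul z a).
Proof.
move=> [c h]; have [d hd] := idealR a; exists (c * d).
setoid_rewrite h. setoid_rewrite ae_mulA. setoid_rewrite hd. apply: scalA.
Qed.
Lemma PT_eq z z' : E z z' -> PT z' -> PT z.
Proof. by move=> h [c hc]; exists c; setoid_rewrite h. Qed.
End Ideal.

Section Phi.
Variables (k : fieldType) (I : finType) (m : I -> I -> option nat).
Local Notation E := (alg_eqv (@nct_rel k I m)).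
Local Notation EN := (alg_eqv (@nc_rel k I m)).

Fixpoint phi (a : fexpr k (option I)) : fexpr k I :=
  match a with
  | FC c => FC c
  | FV (Some i) => FV i
  | FV None => FC 0
  | FAdd a b => FAdd (phi a) (phi b)
  | FMul a b => FMul (phi a) (phi b)
  end.
Fixpoint lift (b : fexpr k I) : fexpr k (option I) :=
  match b with
  | FC c => FC c
  | FV i => FV (Some i)
  | FAdd a b => FAdd (lift a) (lift b)
  | FMul a b => FMul (lift a) (lift b)
  end.

Lemma phi_braidw a b n : phi (braidw a b n) = braidw (phi a) (phi b) n.
Proof. by elim: n a b => //= n IH a b; rewrite IH. Qed.
Lemma phi_fpow a n : phi (fpow a n) = fpow (phi a) n.
Proof. by elim: n => //= n IH; rewrite IH. Qed.
Lemma lift_braidw a b n : lift (braidw a b n) = braidw (lift a) (lift b) n.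
Proof. by elim: n a b => //= n IH a b; rewrite IH. Qed.
Lemma lift_fpow a n : lift (fpow a n) = fpow (lift a) n.
Proof. by elim: n => //= n IH; rewrite IH. Qed.
Lemma phi_lift b : phi (lift b) = b.
Proof. by elim: b => //= a -> b ->. Qed.

Lemma phi_resp a b : E a b -> EN (phi a) (phi b).
Proof.
elim=> /=; try (by constructor); try (by econstructor; eauto).
move=> {}a {}b [i j n ij mij|i n mii|i|i|].
- rewrite !phi_braidw /=; apply: ae_rel; exact: ncr_braid.
- rewrite phi_fpow /=; apply: ae_rel; exact: ncr_nil.
- exact: mul0rE.
- exact: mul0E.
- exact: mul0E.
Qed.

Lemma addr0S (x y : fexpr k (option I)) : E x y -> E x (FAdd y (FC 0)).
Proof. move=> h; setoid_rewrite addr0E; exact: h. Qed.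

Lemma L1 a : exists z, PT m z /\ E a (FAdd (lift (phi a)) z).
Proof.
elim: a => [c|[i|]|a [z1 [p1 h1]] b [z2 [p2 h2]]|a [z1 [p1 h1]] b [z2 [p2 h2]]] /=.
- exists (FC 0); split; [exact: PT0 | apply: addr0S; reflexivity].
- exists (FC 0); split; [exact: PT0 | apply: addr0S; reflexivity].
- exists (FV None); split; [exact: PTT | symmetry; apply: ae_add0].
- exists (FAdd z1 z2); split; first exact: PT_add.
  apply: ae_trans (add_swap _ _ _ _ _); exact: ae_add.
- exists (FAdd (FMul (lift (phi a)) z2) (FMul z1 (FAdd (lift (phi b)) z2))); split.
    apply: PT_add; [exact: PT_mull | exact: PT_mulr].
  transitivity (FMul (FAdd (lift (phi a)) z1) (FAdd (lift (phi b)) z2)); first exact: ae_mul.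
  apply: ae_trans; first apply: ae_mulDl.
  apply: ae_trans; last apply: ae_addA.
  apply: ae_add; [apply: ae_mulDr | reflexivity].
Qed.

Lemma L2 b b' : EN b b' -> exists z, PT m z /\ E (lift b) (FAdd (lift b') z).
Proof.
elim=> {b b'} /=; try by (move=> *; exists (FC 0); split; [exact: PT0 | apply: addr0S; constructor]).
- move=> b b' [i j n ij mij|i n mii].
  + exists (FC 0); split; [exact: PT0|apply: addr0S].
    rewrite !lift_braidw /=; apply: ae_rel; exact: nctr_braid.
  + exists (FV None); split; first exact: PTT.
    rewrite lift_fpow /=. transitivity (FV None : fexpr k (option I)).
      apply: ae_rel; exact: nctr_pow.
    symmetry; apply: ae_add0.
- move=> a b _ [z [pz h]]; exists (FMul (FC (-1)) z); split; first exact: PT_mull.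
  symmetry. setoid_rewrite h. setoid_rewrite ae_addA.
  setoid_rewrite (ae_addC _ z). setoid_rewrite ae_addN. apply: addr0E.
- move=> a b c _ [z1 [p1 h1]] _ [z2 [p2 h2]]; exists (FAdd z2 z1); split; first exact: PT_add.
  setoid_rewrite h1. setoid_rewrite h2. apply: ae_addA.
- move=> a a' b b' _ [z1 [p1 h1]] _ [z2 [p2 h2]]; exists (FAdd z1 z2); split; first exact: PT_add.
  apply: ae_trans (add_swap _ _ _ _ _); exact: ae_add.
- move=> a a' b b' _ [z1 [p1 h1]] _ [z2 [p2 h2]].
  exists (FAdd (FMul (lift a') z2) (FMul z1 (FAdd (lift b') z2))); split.
    apply: PT_add; [exact: PT_mull | exact: PT_mulr].
  transitivity (FMul (FAdd (lift a') z1) (FAdd (lift b') z2)); first exact: ae_mul.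
  apply: ae_trans; first apply: ae_mulDl.
  apply: ae_trans; last apply: ae_addA.
  apply: ae_add; [apply: ae_mulDr | reflexivity].
Qed.

Lemma kerP a : EN (phi a) (FC 0) <-> exists c, E a (FMul (FC c) (FV None)).
Proof.
split.
- move=> h; have [z [pz hz]] := L2 h; have [z' [pz' hz']] := L1 a.
  apply: (@PT_eq _ _ _ _ (FAdd z z')); last exact: PT_add.
  setoid_rewrite hz'. setoid_rewrite hz. apply: ae_add; last reflexivity.
  apply: ae_add0.
- move=> [c h]; apply: ae_trans (phi_resp h) _ => /=; apply: mul0rE.
Qed.
End Phi.

Section Tens.
Variables (k : fieldType) (X : Type) (R : fexpr k X -> fexpr k X -> Prop).
Local Notation E := (alg_eqv R).
Local Notation TE := (t_eqv E).

#[global] Instance TE_equiv : Equivalence TE.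
Proof. split; [exact: te_refl | exact: te_sym | exact: te_trans]. Qed.
#[global] Instance TAdd_prop : Proper (TE ==> TE ==> TE) (@TAdd k X).
Proof. by move=> ? ? ? ? ? ?; apply: te_add. Qed.
#[global] Instance TScale_prop c : Proper (TE ==> TE) (@TScale k X c).
Proof. by move=> ? ? ?; apply: te_scale. Qed.
#[global] Instance TT_prop : Proper (E ==> E ==> TE) (@TT k X).
Proof. by move=> ? ? ? ? ? ?; apply: te_TT. Qed.

Lemma tswap A B C D : TE (TAdd (TAdd A B) (TAdd C D)) (TAdd (TAdd A C) (TAdd B D)).
Proof.
apply: te_trans; first apply: te_addA.
apply: te_trans; last (apply: te_sym; apply: te_addA).
apply: te_add; first reflexivity.
apply: te_trans; first (apply: te_sym; apply: te_addA).
apply: te_trans; last apply: te_addA.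
apply: te_add; [apply: te_addC | reflexivity].
Qed.

Lemma zeroE s t : TE (TScale 0 s) (TScale 0 t).
Proof.
apply: te_trans; first (apply: te_sym; apply: (te_add0 _ t (TScale 0 s))).
apply: te_trans; first apply: te_addC. apply: te_add0.
Qed.

Lemma tpure_r a b t t' : TE t t' -> TE (tmul_pure a b t) (tmul_pure a b t').
Proof.
elim=> /=; try (by constructor); try (by econstructor; eauto).
- move=> c c' d d' h1 h2; apply: te_TT; apply: ae_mul => //; reflexivity.
- move=> a1 a2 c; apply: te_trans; last apply: te_linDl.
  apply: te_TT; [apply: ae_mulDr | reflexivity].
- move=> c b1 b2; apply: te_trans; last apply: te_linDr.
  apply: te_TT; [reflexivity | apply: ae_mulDr].
- move=> c x y; apply: te_trans; last apply: te_linZl.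
  apply: te_TT; [apply: mulCl | reflexivity].
- move=> c x y; apply: te_trans; last apply: te_linZr.
  apply: te_TT; [reflexivity | apply: mulCl].
Qed.

Lemma tmul_r s t t' : TE t t' -> TE (tmul s t) (tmul s t').
Proof.
move=> h; elim: s => [a b|s1 h1 s2 h2|c s1 h1] /=.
- exact: tpure_r.
- exact: te_add.
- exact: te_scale.
Qed.

Lemma tpure_ab a a' b b' t : E a a' -> E b b' ->
  TE (tmul_pure a b t) (tmul_pure a' b' t).
Proof.
move=> ha hb; elim: t => [c d|s1 h1 s2 h2|c s1 h1] /=.
- apply: te_TT; apply: ae_mul => //; reflexivity.
- exact: te_add.
- exact: te_scale.
Qed.

Lemma tpure_addl a1 a2 b t :
  TE (tmul_pure (FAdd a1 a2) b t) (TAdd (tmul_pure a1 b t) (tmul_pure a2 b t)).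
Proof.
elim: t => [c d|s1 h1 s2 h2|c s1 h1] /=.
- apply: te_trans; last apply: te_linDl.
  apply: te_TT; [apply: ae_mulDl | reflexivity].
- apply: te_trans; last apply: tswap. exact: te_add.
- apply: te_trans; last apply: te_scaleDr. exact: te_scale.
Qed.

Lemma tpure_addr a b1 b2 t :
  TE (tmul_pure a (FAdd b1 b2) t) (TAdd (tmul_pure a b1 t) (tmul_pure a b2 t)).
Proof.
elim: t => [c d|s1 h1 s2 h2|c s1 h1] /=.
- apply: te_trans; last apply: te_linDr.
  apply: te_TT; [reflexivity | apply: ae_mulDl].
- apply: te_trans; last apply: tswap. exact: te_add.
- apply: te_trans; last apply: te_scaleDr. exact: te_scale.
Qed.

Lemma scale_comm x y s : TE (TScale x (TScale y s)) (TScale y (TScale x s)).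
Proof.
apply: te_trans; first apply: te_scaleM.
apply: te_trans; last (apply: te_sym; apply: te_scaleM).
by rewrite mulrC; reflexivity.
Qed.

Lemma tpure_Zl c a b t :
  TE (tmul_pure (FMul (FC c) a) b t) (TScale c (tmul_pure a b t)).
Proof.
elim: t => [c' d|s1 h1 s2 h2|c' s1 h1] /=.
- apply: te_trans; last apply: te_linZl.
  apply: te_TT; [apply: ae_mulA | reflexivity].
- apply: te_trans; last (apply: te_sym; apply: te_scaleDr). exact: te_add.
- apply: te_trans; last apply: scale_comm. exact: te_scale.
Qed.

Lemma tpure_Zr c a b t :
  TE (tmul_pure a (FMul (FC c) b) t) (TScale c (tmul_pure a b t)).
Proof.
elim: t => [c' d|s1 h1 s2 h2|c' s1 h1] /=.
- apply: te_trans; last apply: te_linZr.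
  apply: te_TT; [reflexivity | apply: ae_mulA].
- apply: te_trans; last (apply: te_sym; apply: te_scaleDr). exact: te_add.
- apply: te_trans; last apply: scale_comm. exact: te_scale.
Qed.

Lemma tmul_l s s' t : TE s s' -> TE (tmul s t) (tmul s' t).
Proof.
elim=> /=; try (by constructor); try (by econstructor; eauto).
- move=> a a' b b' h1 h2; exact: tpure_ab.
- move=> *; exact: tpure_addl.
- move=> *; exact: tpure_addr.
- move=> *; exact: tpure_Zl.
- move=> *; exact: tpure_Zr.
Qed.

Lemma tmul_prop s s' t t' : TE s s' -> TE t t' -> TE (tmul s t) (tmul s' t').
Proof. move=> h1 h2; apply: te_trans (tmul_l t h1) _; exact: tmul_r. Qed.

Lemma tmulA s t u : TE (tmul (tmul s t) u) (tmul s (tmul t u)).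
Proof.
elim: s => [a b|s1 h1 s2 h2|c s1 h1] /=; last 2 first.
- exact: te_add.
- exact: te_scale.
elim: t => [c d|s1 h1 s2 h2|c s1 h1] /=; last 2 first.
- exact: te_add.
- exact: te_scale.
elim: u => [e f|s1 h1 s2 h2|c' s1 h1] /=; last 2 first.
- exact: te_add.
- exact: te_scale.
apply: te_TT; apply: ae_mulA.
Qed.

Lemma tone1l t : TE (tmul_pure (FC 1) (FC 1) t) t.
Proof.
elim: t => [c d|s1 h1 s2 h2|c s1 h1] /=.
- apply: te_TT; apply: ae_mul1l.
- exact: te_add.
- exact: te_scale.
Qed.

Lemma tmulCr x t : TE (tmul t (TScale x (tone k X))) (TScale x t).
Proof.
elim: t => [c d|s1 h1 s2 h2|c s1 h1] /=.
- apply: te_scale; apply: te_TT; apply: ae_mul1r.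
- apply: te_trans; last (apply: te_sym; apply: te_scaleDr). exact: te_add.
- apply: te_trans; last apply: scale_comm. exact: te_scale.
Qed.

Lemma tmulDr s t u : TE (tmul s (TAdd t u)) (TAdd (tmul s t) (tmul s u)).
Proof.
elim: s => [a b|s1 h1 s2 h2|c s1 h1] /=.
- reflexivity.
- apply: te_trans; last apply: tswap. exact: te_add.
- apply: te_trans; last apply: te_scaleDr. exact: te_scale.
Qed.
End Tens.

Section Bi.
Variables (k : fieldType) (X : Type) (R : fexpr k X -> fexpr k X -> Prop).
Local Notation E := (alg_eqv R).
Local Notation TE := (t_eqv E).
Local Notation T3E := (t3_eqv E).

Fixpoint Dl (a : fexpr k X) : texpr k X :=
  match a with
  | FC c => TScale c (tone k X)
  | FV x => TT (FV x) (FV x)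
  | FAdd a b => TAdd (Dl a) (Dl b)
  | FMul a b => tmul (Dl a) (Dl b)
  end.
Fixpoint ev (a : fexpr k X) : k :=
  match a with
  | FC c => c
  | FV _ => 1
  | FAdd a b => ev a + ev b
  | FMul a b => ev a * ev b
  end.

Definition gl a := TE (Dl a) (TT a a).
Lemma gl_mul a b : gl a -> gl b -> gl (FMul a b).
Proof. move=> ha hb; rewrite /gl /=; exact: (tmul_prop ha hb). Qed.
Lemma gl_one : gl (FC 1).
Proof. exact: te_scale1. Qed.
Lemma gl_braidw a b n : gl a -> gl b -> gl (braidw a b n).
Proof.
elim: n a b => [|n IH] a b ha hb /=; first exact: gl_one.
apply: gl_mul => //; exact: IH.
Qed.
Lemma gl_fpow a n : gl a -> gl (fpow a n).
Proof. elim: n => [|n IH] ha /=; [exact: gl_one | apply: gl_mul => //; exact: IH]. Qed.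

Lemma D_resp : (forall a b, R a b -> TE (Dl a) (Dl b)) ->
  forall a b, E a b -> TE (Dl a) (Dl b).
Proof.
move=> HR a b; elim=> {a b} /=; try (by constructor); try (by econstructor; eauto).
- move=> a b h; exact: HR.
- move=> a a' b b' _ h1 _ h2; exact: tmul_prop.
- move=> a. apply: te_trans; last (apply: (zeroE _ (Dl a))).
  apply: te_trans; first (apply: te_add; [apply: te_scale; apply: tone1l | apply: te_sym; apply: te_scale1]).
  apply: te_trans; first (apply: te_sym; apply: te_scaleDl).
  rewrite addNr; reflexivity.
- move=> *; exact: tmulA.
- move=> a; apply: te_trans; last apply: te_scale1. apply: te_scale; exact: tone1l.
- move=> a; apply: te_trans; first apply: tmulCr. exact: te_scale1.
- move=> *; exact: tmulDr.
- move=> x y; apply: te_trans; first (apply: te_sym; apply: te_scaleM).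
  apply: te_scale; apply: te_scale; apply: te_TT; apply: ae_sym; apply: ae_mul1l.
- move=> x a; apply: te_trans; last (apply: te_sym; apply: tmulCr).
  apply: te_scale; exact: tone1l.
Qed.

Lemma ev_resp : (forall a b, R a b -> ev a = ev b) ->
  forall a b, E a b -> ev a = ev b.
Proof.
move=> HR a b; elim=> {a b} /=; try done.
- by move=> a b c _ -> _ ->.
- by move=> a a' b b' _ -> _ ->.
- by move=> a a' b b' _ -> _ ->.
- by move=> *; rewrite addrA.
- by move=> *; rewrite addrC.
- by move=> *; rewrite add0r.
- by move=> *; rewrite mulN1r addNr.
- by move=> *; rewrite mulrA.
- by move=> *; rewrite mul1r.
- by move=> *; rewrite mulr1.
- by move=> *; rewrite mulrDl.
- by move=> *; rewrite mulrDr.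
- by move=> *; rewrite mulrC.
Qed.

Inductive good : texpr k X -> Prop :=
 | g_TT w : gl w -> good (TT w w)
 | g_add s t : good s -> good t -> good (TAdd s t)
 | g_sc c s : good s -> good (TScale c s).

Lemma good_tmul s t : good s -> good t -> good (tmul s t).
Proof.
move=> hs ht; elim: hs => [w hw|s1 s2 _ h1 _ h2|c s1 _ h1] /=; last 2 first.
- exact: g_add.
- exact: g_sc.
elim: ht => [v hv|t1 t2 _ h1 _ h2|c t1 _ h1] /=; last 2 first.
- exact: g_add.
- exact: g_sc.
apply: g_TT; exact: gl_mul.
Qed.

Lemma good_D a : good (Dl a).
Proof.
elim: a => [c|x|a ha b hb|a ha b hb] /=.
- apply: g_sc; apply: g_TT; exact: gl_one.
- apply: g_TT; rewrite /gl; reflexivity.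
- exact: g_add.
- exact: good_tmul.
Qed.

Lemma t_append_prop s s' c : TE s s' -> T3E (t_append s c) (t_append s' c).
Proof.
elim=> /=; try (by constructor); try (by econstructor; eauto).
move=> *; apply: t3e_T3 => //; exact: ae_refl.
Qed.
Lemma t_prepend_prop s s' c : TE s s' -> T3E (t_prepend c s) (t_prepend c s').
Proof.
elim=> /=; try (by constructor); try (by econstructor; eauto).
move=> *; apply: t3e_T3 => //; exact: ae_refl.
Qed.

Lemma coassoc a : T3E (t_Dl Dl (Dl a)) (t_Dr Dl (Dl a)).
Proof.
elim: (good_D a) => [w hw|s t _ h1 _ h2|c s _ h1] /=.
- apply: t3e_trans; first exact: t_append_prop hw.
  apply: t3e_sym; exact: t_prepend_prop hw.
- exact: t3e_add.
- exact: t3e_scale.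
Qed.

Lemma leafmul x y a c :
  E (FMul (FC (x * y)) (FMul a c)) (FMul (FMul (FC x) a) (FMul (FC y) c)).
Proof.
symmetry. apply: ae_trans; first apply: ae_mulA.
apply: ae_trans; first (apply: ae_mul; [reflexivity | apply: mulCl]).
apply: scalA.
Qed.

Lemma epsl_pure a b t :
  E (t_epsl ev (tmul_pure a b t)) (FMul (FMul (FC (ev a)) b) (t_epsl ev t)).
Proof.
elim: t => [c d|s1 h1 s2 h2|y s h] /=.
- exact: leafmul.
- apply: ae_trans; last (apply: ae_sym; apply: ae_mulDr). exact: ae_add.
- apply: ae_trans; last (apply: ae_sym; apply: mulCl).
  apply: ae_mul; [reflexivity | exact: h].
Qed.
Lemma epsl_mul s t :
  E (t_epsl ev (tmul s t)) (FMul (t_epsl ev s) (t_epsl ev t)).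
Proof.
elim: s => [a b|s1 h1 s2 h2|y s h] /=.
- exact: epsl_pure.
- apply: ae_trans; last (apply: ae_sym; apply: ae_mulDl). exact: ae_add.
- apply: ae_trans; last (apply: ae_sym; apply: ae_mulA).
  apply: ae_mul; [reflexivity | exact: h].
Qed.
Lemma epsr_pure a b t :
  E (t_epsr ev (tmul_pure a b t)) (FMul (FMul (FC (ev b)) a) (t_epsr ev t)).
Proof.
elim: t => [c d|s1 h1 s2 h2|y s h] /=.
- exact: leafmul.
- apply: ae_trans; last (apply: ae_sym; apply: ae_mulDr). exact: ae_add.
- apply: ae_trans; last (apply: ae_sym; apply: mulCl).
  apply: ae_mul; [reflexivity | exact: h].
Qed.
Lemma epsr_mul s t :
  E (t_epsr ev (tmul s t)) (FMul (t_epsr ev s) (t_epsr ev t)).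
Proof.
elim: s => [a b|s1 h1 s2 h2|y s h] /=.
- exact: epsr_pure.
- apply: ae_trans; last (apply: ae_sym; apply: ae_mulDl). exact: ae_add.
- apply: ae_trans; last (apply: ae_sym; apply: ae_mulA).
  apply: ae_mul; [reflexivity | exact: h].
Qed.

Lemma counit a : E (t_epsl ev (Dl a)) a /\ E (t_epsr ev (Dl a)) a.
Proof.
elim: a => [c|x|a [ha1 ha2] b [hb1 hb2]|a [ha1 ha2] b [hb1 hb2]] /=.
- have h : E (FMul (FC c) (FMul (FC 1) (FC 1))) (FC c).
    apply: ae_trans; last apply: ae_mul1r.
    apply: ae_mul; [reflexivity | apply: ae_mul1l].
  by split; exact: h.
- split; apply: ae_mul1l.
- split; exact: ae_add.
- split.
  + apply: ae_trans; first apply: epsl_mul. exact: ae_mul.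
  + apply: ae_trans; first apply: epsr_mul. exact: ae_mul.
Qed.
End Bi.

Section Main.
Variables (k : fieldType) (I : finType) (m : I -> I -> option nat).
Local Notation E := (alg_eqv (@nct_rel k I m)).
Local Notation TE := (t_eqv E).

Lemma ev_braidw (a b : fexpr k (option I)) n : ev a = 1 -> ev b = 1 -> ev (braidw a b n) = 1.
Proof. by elim: n a b => //= n IH a b ha hb; rewrite ha IH // mul1r. Qed.
Lemma ev_fpow (a : fexpr k (option I)) n : ev a = 1 -> ev (fpow a n) = 1.
Proof. by elim: n => //= n IH ha; rewrite ha IH // mul1r. Qed.

Lemma HRev (a b : fexpr k (option I)) : @nct_rel k I m a b -> ev a = ev b.
Proof.
case=> [i j n _ _|i n _|i|i|] /=; try by rewrite mul1r.
- by rewrite !ev_braidw.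
- by rewrite ev_fpow.
Qed.

Lemma glV (x : option I) : gl (@nct_rel k I m) (FV x).
Proof. rewrite /gl /=; reflexivity. Qed.

Lemma HRD (a b : fexpr k (option I)) : @nct_rel k I m a b -> TE (Dl a) (Dl b).
Proof.
move=> h; case: h => [i j n ij mij|i n mii|i|i|] /=;
  try (by apply: te_TT; apply: ae_rel; constructor).
- apply: te_trans; first apply: (gl_braidw _ (glV _) (glV _)).
  apply: te_trans; last (apply: te_sym; apply: (gl_braidw _ (glV _) (glV _))).
  by apply: te_TT; apply: ae_rel; constructor.
- apply: te_trans; first apply: (gl_fpow _ (glV _)).
  by apply: te_TT; apply: ae_rel; constructor.
Qed.

Lemma bialg_ex : is_bialgebra (NCt_eqv m) (@Dl k (option I)) (@ev k (option I)) /\ gens_grouplike (NCt_eqv m) (@Dl k (option I)) (@ev k (option I)).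
Proof.
split; last by move=> x; split => //; reflexivity.
split; first exact: (D_resp HRD).
split; first by move=> x; reflexivity.
split; first by move=> a b; reflexivity.
split; first by move=> a b; reflexivity.
split; first exact: (ev_resp HRev).
split; first by [].
split; first by [].
split; first by [].
split; first exact: coassoc.
exact: counit.
Qed.

Lemma bialg_uniq (D D' : fexpr k (option I) -> texpr k (option I))
          (e e' : fexpr k (option I) -> k) :
     is_bialgebra (NCt_eqv m) D e -> gens_grouplike (NCt_eqv m) D e ->
     is_bialgebra (NCt_eqv m) D' e' -> gens_grouplike (NCt_eqv m) D' e' ->
     forall a, t_eqv (NCt_eqv m) (D a) (D' a) /\ e a = e' a.
Proof.
move=> [_ [DC [DA [DM [_ [eC [eA [eM _]]]]]]]] g
       [_ [DC' [DA' [DM' [_ [eC' [eA' [eM' _]]]]]]]] g' a.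
elim: a => [c|x|a [ha1 ha2] b [hb1 hb2]|a [ha1 ha2] b [hb1 hb2]].
- split; last by rewrite eC eC'.
  apply: te_trans; first exact: DC. apply: te_sym; exact: DC'.
- have [h1 h2] := g x; have [h1' h2'] := g' x.
  split; last by rewrite h2 h2'.
  apply: te_trans; first exact: h1. apply: te_sym; exact: h1'.
- split; last by rewrite eA eA' ha2 hb2.
  apply: te_trans; first exact: DA. apply: te_trans; last (apply: te_sym; exact: DA').
  exact: te_add.
- split; last by rewrite eM eM' ha2 hb2.
  apply: te_trans; first exact: DM. apply: te_trans; last (apply: te_sym; exact: DM').
  exact: tmul_prop.
Qed.
End Main.

Theorem mainTheorem14 (k : fieldType) (I : finType) (m : I -> I -> option nat)
  (hM : gen_coxeter m) :
  (* k T_inf is a two-sided ideal of NC~(M) *)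
  (forall a : fexpr k (option I),
     (exists c : k, NCt_eqv m (FMul a (Tinf k I)) (FMul (FC c) (Tinf k I))) /\
     (exists c : k, NCt_eqv m (FMul (Tinf k I) a) (FMul (FC c) (Tinf k I))))
  /\
  (* NC~(M) / k T_inf is isomorphic to NC(M): a surjective algebra map
     NC~(M) -> NC(M) with kernel exactly k T_inf *)
  (exists phi : fexpr k (option I) -> fexpr k I,
     [/\ alg_hom (NCt_eqv m) (NC_eqv m) phi,
         (forall b, exists a, NC_eqv m (phi a) b) &
         (forall a, NC_eqv m (phi a) (FC 0) <->
                    exists c : k, NCt_eqv m a (FMul (FC c) (Tinf k I)))])
  /\
  (* existence of a bialgebra structure with all T_i, T_inf grouplike *)
  (exists (D : fexpr k (option I) -> texpr k (option I))
          (e : fexpr k (option I) -> k),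
     is_bialgebra (NCt_eqv m) D e /\ gens_grouplike (NCt_eqv m) D e)
  /\
  (* uniqueness of such a structure *)
  (forall (D D' : fexpr k (option I) -> texpr k (option I))
          (e e' : fexpr k (option I) -> k),
     is_bialgebra (NCt_eqv m) D e -> gens_grouplike (NCt_eqv m) D e ->
     is_bialgebra (NCt_eqv m) D' e' -> gens_grouplike (NCt_eqv m) D' e' ->
     forall a, t_eqv (NCt_eqv m) (D a) (D' a) /\ e a = e' a).
Proof.
split; first by move=> a; split; [exact: (idealL m a) | exact: (idealR m a)].
split.
  exists (@phi k I); split.
  - split.
    + move=> a b h; exact: phi_resp.
    + move=> x; exact: ae_refl.
    + move=> a b; exact: ae_refl.
    + move=> a b; exact: ae_refl.
  - move=> b; exists (lift b); rewrite phi_lift; exact: ae_refl.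
  - move=> a; exact: kerP.
split; first by exists (@Dl k (option I)), (@ev k (option I)); exact: bialg_ex.
exact: bialg_uniq.
Qed.
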